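(* A collection $(p^{(n)}_k)^{n\geq1}_{k\leq n}$ where $p^{(n)}_k$ is a non-negative, symmetric function on $\{(n_1,\dots,n_k):\,\sum_{j=1}^k n_j=n\}$, is an EPerPF if and only if it satisfies $$p^{(1)}(1)=1,\qquad p^{(n)}_{k(\pi)}(\mathrm{c}(\pi))=\sum_{\sigma\in\mathcal{A}(\pi)}p_{k(\sigma)}^{(n+1)}(\mathrm{c}(\sigma))\quad\text{for any }\pi\in\mathcal S_n.$$
   Context: $\mathcal S_n$ is the symmetric group on $[n]$. For $\pi\in\mathcal S_n$, $k(\pi)$ is its number of cycles and $\mathrm{c}(\pi)=(c_1(\pi),\dots,c_{k(\pi)}(\pi))$ its vector of cycle lengths (cycles written starting from their least element and ordered by first elements). The deletion map $\operatorname{del}:\mathcal S_{n+1}\to\mathcal S_n$ is $\operatorname{del}(\sigma)(i)=\sigma(i)$ if $i\neq\sigma^{-1}(n+1)$ and $\operatorname{del}(\sigma)(i)=\sigma(n+1)$ if $i=\sigma^{-1}(n+1)$ (it deletes $n+1$ from the cycle representation), and $\mathcal A(\pi)=\{\sigma\in\mathcal S_{n+1}:\operatorname{del}(\sigma)=\pi\}$ (so $|\mathcal A(\pi)|=n+1$). A random permutation is finitely exchangeable if permutations with equal cycle type have equal probability; it is exchangeable if its law is the $n$-th element of a sequence of laws of finitely exchangeable random permutations $\boldsymbol\pi_m\in\mathcal S_m$ that is consistent in the sense $\operatorname{del}(\boldsymbol\pi_{m+1})\overset{d}{=}\boldsymbol\pi_m$. Such laws are exactly those with pmf $p(\pi)=\varphi^{(n)}_k(n_1,\dots,n_k)/\prod_{j=1}^k(n_j-1)!$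 for an EPPF $(\varphi^{(n)})$ and cycle lengths $(n_1,\dots,n_k)$ of $\pi$. An EPerPF (exchangeable permutation probability function) is the sequence $(p^{(n)})_{n\geq1}$ of functions of this form determining such a consistent sequence of laws of exchangeable random permutations. *)

(* Defs.v *)
From HB Require Import structures.
From mathcomp Require Import all_boot all_order all_algebra all_fingroup.
From mathcomp Require Import all_reals.
Set Implicit Arguments. Unset Strict Implicit. Unset Printing Implicit Defensive.
Import Order.TTheory GRing.Theory Num.Theory.

(* Convention: the ground set [n] = {1,...,n} is represented by 'I_n = {0,...,n-1}
   (i.e. i <-> i+1); so the new element n+1 of [n+1] is ord_max : 'I_n.+1. *)

(* c(pi): the cycle lengths, listed in the order of the least elements of the
   cycles (enum 'I_n is increasing; x is selected iff it is the least element of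
   its cycle). k(pi) = size (cyc pi). *)
Definition cyc (n : nat) (s : 'S_n) : seq nat :=
  [seq #|porbit s x| | x <- enum 'I_n & [forall y in porbit s x, (x <= y)%N]].

Definition ncycles (n : nat) (s : 'S_n) : nat := size (cyc s).

(* The deletion map del : S_{n+1} -> S_n, as a function 'I_n -> 'I_n:
   del(sigma)(i) = sigma(i) if sigma(i) <> n+1, and sigma(n+1) otherwise. *)
Definition del_fun (n : nat) (s : 'S_n.+1) (i : 'I_n) : 'I_n :=
  let j := s (widen_ord (leqnSn n) i) in
  let j' := if val j == n then s ord_max else j in
  insubd i (val j').

Definition inA (n : nat) (pi : 'S_n) (s : 'S_n.+1) : bool :=
  [forall i : 'I_n, del_fun s i == pi i].

(* p n s stands for p^{(n)}_{size s}(s). *)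
Definition law (R : realType) (p : nat -> seq nat -> R) (n : nat) (pi : 'S_n) : R :=
  p n (cyc pi).

Definition is_EPerPF (R : realType) (p : nat -> seq nat -> R) : Prop :=
  (forall n : nat, (0 < n)%N ->
     [/\ (forall pi : 'S_n, (0 <= law p pi)%R),
         (\sum_(pi : 'S_n) law p pi = 1)%R
       & (forall pi pi' : 'S_n, perm_eq (cyc pi) (cyc pi') -> law p pi = law p pi')])
  /\
  (forall n : nat, (0 < n)%N -> forall pi : 'S_n,
     law p pi = (\sum_(s : 'S_n.+1 | inA pi s) law p s)%R).

(* Main.v *)
Require Import Defs.
From HB Require Import structures.
From mathcomp Require Import all_boot all_order all_algebra all_fingroup.
From mathcomp Require Import all_reals.
Import Order.TTheory GRing.Theory Num.Theory.

Set Implicit Arguments. Unset Strict Implicit.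
Section Aux.

Definition jp (n : nat) (s : 'S_n.+1) (i : 'I_n) : 'I_n.+1 :=
  if val (s (widen_ord (leqnSn n) i)) == n then s ord_max
  else s (widen_ord (leqnSn n) i).

Lemma jp_lt n (s : 'S_n.+1) i : (val (jp s i) < n)%N.
Proof.
rewrite /jp; case: ifP => [/eqP E|/negbT E].
  have : val (s ord_max) != n.
    apply/negP => /eqP E2.
    have : s ord_max = s (widen_ord (leqnSn n) i) by apply: val_inj; rewrite /= E E2.
    move/perm_inj => /(congr1 val) /= Hn.
    by move: (ltn_ord i); rewrite -Hn ltnn.
  by have := ltn_ord (s ord_max); rewrite ltnS leq_eqVlt => /orP [->|].
by have := ltn_ord (s (widen_ord (leqnSn n) i)); rewrite ltnS leq_eqVlt (negbTE E).
Qed.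

Lemma del_val n (s : 'S_n.+1) i : val (del_fun s i) = val (jp s i).
Proof. by rewrite /del_fun insubdK //; exact: jp_lt. Qed.

Lemma del_inj n (s : 'S_n.+1) : injective (del_fun s).
Proof.
move=> i i' E.
have E' : jp s i = jp s i' by apply: val_inj; rewrite -!del_val E.
move: E'; rewrite /jp.
have key : forall a : 'I_n, s ord_max = s (widen_ord (leqnSn n) a) -> False.
  move=> a /perm_inj /(congr1 val) /= Hn.
  by move: (ltn_ord a); rewrite -Hn ltnn.
case: ifP => [/eqP E1|/negbT E1]; case: ifP => [/eqP E2|/negbT E2].
- move=> _; have : s (widen_ord (leqnSn n) i) = s (widen_ord (leqnSn n) i').
    by apply: val_inj; rewrite E1 E2.
  by move/perm_inj/(congr1 val) => /= H; apply: val_inj.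
- by move=> /key.
- by move=> /esym /key.
- by move/perm_inj/(congr1 val) => /= H; apply: val_inj.
Qed.

Definition delp n (s : 'S_n.+1) : 'S_n := perm (@del_inj n s).

Lemma inAE n (pi : 'S_n) s : inA pi s = (delp s == pi).
Proof.
apply/forallP/eqP => [H|<- i]; last by rewrite permE.
by apply/permP => i; rewrite permE; apply/eqP; apply: H.
Qed.

Definition Min n (s : 'S_n) (x : 'I_n) : bool :=
  [forall y in porbit s x, (x <= y)%N].

Lemma cycE n (s : 'S_n) : cyc s = [seq #|porbit s x| | x <- enum 'I_n & Min s x].
Proof. by []. Qed.

Lemma cyc_pos n (s : 'S_n) : all (fun m => 0 < m)%N (cyc s).
Proof.
apply/allP => m; rewrite cycE => /mapP [x _ ->].
by rewrite lt0n card_porbit_neq0.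
Qed.

Lemma cyc_size n (s : 'S_n) : (size (cyc s) <= n)%N.
Proof.
by rewrite cycE size_map size_filter (leq_trans (count_size _ _)) // size_enum_ord.
Qed.

Lemma cyc_sum n (s : 'S_n) : sumn (cyc s) = n.
Proof.
case: n s => [|n] s.
  by rewrite cycE enum_ord0.
pose rep (y : 'I_n.+1) := [arg min_(z < y in porbit s y) (val z)].
have repP : forall y, rep y \in porbit s y /\ forall z, z \in porbit s y -> (rep y <= z)%N.
  move=> y; rewrite /rep; case: arg_minnP; first exact: porbit_id.
  by move=> z Hz Hm; split.
have Mrep : forall y, Min s (rep y).
  move=> y; have [H1 H2] := repP y; apply/forallP => z; apply/implyP => Hz.
  have E : porbit s (rep y) = porbit s y by apply/eqP; rewrite eq_porbit_mem.
  by apply: H2; rewrite -E.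
have repE : forall x y, Min s x -> (rep y == x) = (y \in porbit s x).
  move=> x y Mx; have [H1 H2] := repP y; apply/eqP/idP => [E|Hy].
    by rewrite porbit_sym -E.
  have Exy : porbit s y = porbit s x by apply/eqP; rewrite eq_porbit_mem.
  apply/val_inj/eqP; rewrite eqn_leq; apply/andP; split.
    by apply: H2; rewrite Exy porbit_id.
  by move/forallP: Mx => /(_ (rep y)) /implyP; apply; rewrite -Exy.
rewrite cycE sumnE big_map big_filter enumT.
transitivity (\sum_(y : 'I_n.+1) 1)%N; last by rewrite sum1_card card_ord.
rewrite [RHS](partition_big rep (Min s)) //.
apply: eq_bigr => x Mx; rewrite -sum1_card.
apply: eq_bigl => y; by rewrite repE.
Qed.

Lemma cyc1 (pi : 'S_1) : cyc pi = [:: 1%N].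
Proof.
have := cyc_sum pi; have := cyc_size pi.
by case: (cyc pi) => [|a [|b t]] //= _; rewrite addn0 => ->.
Qed.

End Aux.

Theorem theorem2 (R : realType) (p : nat -> seq nat -> R)
  (p_nonneg : forall (n : nat) (s : seq nat),
      (0 < n)%N -> all (fun m => 0 < m)%N s -> sumn s = n -> (0 <= p n s)%R)
  (p_sym : forall (n : nat) (s t : seq nat),
      (0 < n)%N -> all (fun m => 0 < m)%N s -> sumn s = n ->
      perm_eq s t -> p n s = p n t) :
  is_EPerPF p <->
  (p 1%N [:: 1%N] = 1%R /\
   forall (n : nat), (0 < n)%N -> forall pi : 'S_n,
     p n (cyc pi) = (\sum_(s : 'S_n.+1 | inA pi s) p n.+1 (cyc s))%R).
Proof.
have sum1 : (\sum_(pi : 'S_1) p 1%N (cyc pi) = p 1%N [:: 1%N])%R.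
  rewrite (eq_bigr (fun _ => p 1%N [:: 1%N])) => [|pi _]; last by rewrite cyc1.
  by rewrite sumr_const card_Sn.
split.
  move=> [H1 H2]; split; last exact: H2.
  by have [_ <- _] := H1 1%N isT; rewrite -sum1.
move=> [P1 P2]; split; last exact: P2.
move=> n n0; split.
- by move=> pi; apply: p_nonneg => //; [exact: cyc_pos | exact: cyc_sum].
- rewrite /law; elim: n n0 => [//|[|n] IH] _; first by rewrite sum1.
  rewrite (partition_big (@delp n.+1) predT) //=.
  rewrite -[RHS](IH isT); apply: eq_bigr => pi _.
  rewrite P2 //; apply: eq_bigl => s; by rewrite inAE.
- move=> pi pi' E; apply: p_sym => //; [exact: cyc_pos | exact: cyc_sum].
Qed.
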